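(* Let $q\ge 4$ and let $H_1$ be a hyperplane of $\mathrm{PG}(U_1)$ with $|H_1\cap\mathcal O_1|=q^2-q+1$. Then every twisted cubic of $\mathcal O_1$ meets $H_1$ in at most three points.
   Context: $q$ is a prime power. Let $U_1\subset\mathbb F_{q^3}^8$ be the set of vectors $(a,b^{q^2},b^{q},c,b,c^{q},c^{q^2},d)$ with $a,d\in\mathbb F_q$, $b,c\in\mathbb F_{q^3}$; it is an $8$-dimensional $\mathbb F_q$-vector space, so $\mathrm{PG}(U_1)\cong\mathrm{PG}(7,q)$. For $(a,b,c,d)\ne 0$ let $P(a,b,c,d)$ be the point of $\mathrm{PG}(U_1)$ spanned by this vector. Let $\mathcal O_1=\{P(1,t,t^{q^2+q},t^{q^2+q+1}) : t\in\mathbb F_{q^3}\}\cup\{P(0,0,0,1)\}$. Let $\theta:\mathrm{PG}(1,q^3)\to\mathcal O_1$ be the bijection $\langle(1,t)\rangle\mapsto P(1,t,t^{q^2+q},t^{q^2+q+1})$, $\langle(0,1)\rangle\mapsto P(0,0,0,1)$. A $q$-order subline of $\mathrm{PG}(1,q^3)$ is the image of $\mathrm{PG}(1,q)=\{\langle(1,t)\rangle:t\in\mathbb F_q\}\cup\{\langle(0,1)\rangle\}$ under an element of $\mathrm{PGL}(2,q^3)$; the sets $\theta(L)$ are twisted cubics (each spanning a solid), called the twisted cubics of $\mathcal O_1$. *)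

(* Defs.v *)
From HB Require Import structures.
From mathcomp Require Import all_boot all_order all_algebra all_field.
Set Implicit Arguments. Unset Strict Implicit. Unset Printing Implicit Defensive.
Import GRing.Theory.
Local Open Scope ring_scope.

(* F plays the role of F_{q^3}; F_q is realised as {x in F | x^q = x}. *)
Section Defs.
Variables (F : finFieldType) (q : nat).

Definition inFq (x : F) : bool := x ^+ q == x.

Definition U1vec (a b c d : F) : 'rV[F]_8 :=
  \row_(i < 8) nth 0 [:: a; b ^+ (q ^ 2); b ^+ q; c; b; c ^+ q; c ^+ (q ^ 2); d] i.

Definition inU1 (v : 'rV[F]_8) : Prop :=
  exists a b c d, [/\ inFq a, inFq d & v = U1vec a b c d].

(* f is a nonzero F_q-linear functional U_1 -> F_q; its kernel defines the
   hyperplane H = { <v> : v in U_1 \ 0, f v = 0 } of PG(U_1). *)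
Definition hyperplane_functional (f : 'rV[F]_8 -> F) : Prop :=
  [/\ (forall u v, inU1 u -> inU1 v -> f (u + v) = f u + f v),
      (forall (l : F) u, inFq l -> inU1 u -> f (l *: u) = l * f u),
      (forall u, inU1 u -> inFq (f u))
    & exists u, inU1 u /\ f u != 0].

(* PG(1,q^3) as option F : Some t = <(1,t)>, None = <(0,1)> *)
Definition hom (x : option F) : 'rV[F]_2 :=
  match x with Some t => \row_(i < 2) (if i == 0 :> nat then 1 else t)
             | None => \row_(i < 2) (if i == 0 :> nat then 0 else 1) end.

Definition dehom (v : 'rV[F]_2) : option F :=
  if v 0 0 != 0 then Some (v 0 1 / v 0 0) else None.

Definition pgl_act (M : 'M[F]_2) (x : option F) : option F := dehom (hom x *m M).

Definition PG1q : {set option F} :=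
  [set x : option F | if x is Some t then inFq t else true].

Definition subline (M : 'M[F]_2) : {set option F} := pgl_act M @: PG1q.

Definition theta (x : option F) : 'rV[F]_8 :=
  match x with
  | Some t => U1vec 1 t (t ^+ (q ^ 2 + q)) (t ^+ (q ^ 2 + q + 1))
  | None => U1vec 0 0 0 1
  end.

(* H_1 meets O_1 in #|[set x | theta x in H]| points (theta is a bijection) *)
Definition meetO1 (f : 'rV[F]_8 -> F) : {set option F} :=
  [set x : option F | f (theta x) == 0].

End Defs.

(* Main.v *)
Require Import Defs.
From HB Require Import structures.
From mathcomp Require Import all_boot all_order all_algebra all_field.
Local Open Scope ring_scope.
From mathcomp Require Import ring.
Import Defs.
Set Implicit Arguments. Unset Strict Implicit. Unset Printing Implicit Defensive.
Import GRing.Theory.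
Local Open Scope ring_scope.

Section Frob.
Variables (F : finFieldType) (q : nat).
Hypothesis frD_ : forall x y : F, (x + y) ^+ q = x ^+ q + y ^+ q.
Hypothesis fr3_ : forall x : F, x ^+ (q ^ 3) = x.
Hypothesis q1 : (1 < q)%N.

Definition fr (x : F) := x ^+ q.
Lemma frD x y : fr (x + y) = fr x + fr y. Proof. exact: frD_. Qed.
Lemma frM x y : fr (x * y) = fr x * fr y. Proof. exact: exprMn. Qed.
Lemma fr0 : fr 0 = 0. Proof. by rewrite /fr expr0n; case: q q1. Qed.
Lemma fr1 : fr 1 = 1. Proof. by rewrite /fr expr1n. Qed.
Lemma frN x : fr (- x) = - fr x.
Proof. by apply/eqP; rewrite -subr_eq0 opprK -frD addNr fr0. Qed.
Lemma frB x y : fr (x - y) = fr x - fr y. Proof. by rewrite frD frN. Qed.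
Lemma frV x : fr (x^-1) = (fr x)^-1. Proof. exact: exprVn. Qed.
Lemma fr3 x : fr (fr (fr x)) = x.
Proof. by rewrite /fr -!exprM -[X in _ = X]fr3_; congr (_ ^+ _); rewrite !expnS expn0 muln1. Qed.

Definition Fqs := [set x : F | fr x == x].
Definition Trf x := x + fr x + fr (fr x).
Lemma Trf_Fq x : fr (Trf x) = Trf x.
Proof. by rewrite /Trf !frD fr3; ring. Qed.

Definition flin (h : F -> F) :=
  [/\ forall x y, h (x + y) = h x + h y,
      forall l x, fr l = l -> h (l * x) = l * h x
    & forall x, fr (h x) = h x].

Lemma flin0 h : flin h -> h 0 = 0.
Proof. case=> hD _ _; have e := hD 0 0; rewrite addr0 in e.
by apply: (@addrI _ (h 0)); rewrite addr0 -e. Qed.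
Lemma flinN h x : flin h -> h (- x) = - h x.
Proof.
move=> hl; have [hD _ _] := hl; apply/eqP; rewrite -subr_eq0 opprK addrC -hD addrN.
by rewrite flin0.
Qed.
Lemma flinB h x y : flin h -> h (x - y) = h x - h y.
Proof. by move=> hl; have [hD _ _] := hl; rewrite hD flinN. Qed.

Lemma card_roots (p : {poly F}) : p != 0 -> (#|[set x | root p x]| < size p)%N.
Proof.
move=> p0; rewrite cardE; apply: max_poly_roots => //.
  by apply/allP => x; rewrite mem_enum inE.
exact: enum_uniq.
Qed.

Lemma kernel_card h t0 : flin h -> h t0 != 0 ->
  (#|[set t | h t == 0%R]| * #|Fqs| = #|F|)%N.
Proof.
move=> hl ht0; have [hD hZ hF] := hl.
set u := (h t0)^-1 * t0.
have hu : h u = 1 by rewrite /u hZ ?mulVf // frV hF.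
pose m (kc : F * F) := kc.1 + kc.2 * u.
have hm kc : kc \in setX [set t | h t == 0%R] Fqs -> h (m kc) = kc.2.
  case: kc => k c; rewrite inE /= !inE => /andP [/eqP hk /eqP hc].
  by rewrite /m /= hD hk hZ // hu mulr1 add0r.
rewrite -cardsX -(card_in_imset (f := m)).
  rewrite -cardsT; congr (#|pred_of_set _|); apply/setP => t; rewrite !inE.
  apply/imsetP; exists (t - h t * u, h t).
    by rewrite !inE /= flinB // hZ // hu mulr1 subrr eqxx /= hF.
  by rewrite /m /= subrK.
move=> [k c] [k' c'] hkc hkc' e.
have ec : c = c' by have := hm _ hkc; have := hm _ hkc'; rewrite e /= => -> .
by move: e; rewrite /m /= ec => /addIr ->.
Qed.

Lemma frfr x : fr (fr x) = x ^+ (q ^ 2). Proof. by rewrite /fr -exprM mulnn. Qed.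

Lemma Trf_flin : flin Trf.
Proof.
split.
- by move=> x y; rewrite /Trf !frD; ring.
- by move=> l x hl; rewrite /Trf !frM !hl; ring.
- exact: Trf_Fq.
Qed.

Hypothesis hFc : #|F| = (q ^ 3)%N.

Lemma card_Fq : #|Fqs| = q.
Proof.
have q0 : (0 < q)%N by apply: ltnW.
have up : (#|Fqs| <= q)%N.
  have sz : size ('X^q - 'X : {poly F}) = q.+1.
    by rewrite size_polyDl size_polyXn // size_polyN size_polyX ltnS.
  have p0 : ('X^q - 'X : {poly F}) != 0 by rewrite -size_poly_eq0 sz.
  rewrite -ltnS -sz; apply: leq_ltn_trans (card_roots p0).
  apply: subset_leq_card; apply/subsetP => x; rewrite !inE /root !hornerE.
  by rewrite subr_eq0.
set T : {poly F} := 'X^(q ^ 2) + 'X^q + 'X.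
have qq : (q < q ^ 2)%N by rewrite -mulnn -{1}(muln1 q) ltn_pmul2l.
have sz : size T = (q ^ 2).+1.
  have s2 : size ('X^(q ^ 2) + 'X^q : {poly F}) = (q ^ 2).+1.
    by rewrite (@size_polyDl _ 'X^(q ^ 2) 'X^q) !size_polyXn // ltnS.
  by rewrite /T (@size_polyDl _ ('X^(q ^ 2) + 'X^q) 'X) s2 // size_polyX ltnS (leq_trans q1) // ltnW.
have p0 : T != 0 by rewrite -size_poly_eq0 sz.
have kup : (#|[set t | Trf t == 0%R]| <= q ^ 2)%N.
  rewrite -ltnS -sz; apply: leq_ltn_trans (card_roots p0).
  apply: subset_leq_card; apply/subsetP => x; rewrite !inE /root /T !hornerE.
  by rewrite /Trf frfr /fr => /eqP e; apply/eqP; rewrite -[RHS]e; ring.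
have [t0 ht0] : exists t0, Trf t0 != 0.
  case: (pickP (fun t => Trf t != 0)) => [t0 h|H]; first by exists t0.
  have e : [set t | Trf t == 0] = setT.
    by apply/setP => t; rewrite !inE; have := H t => /= /negbFE.
  by move: kup; rewrite e cardsT hFc leq_exp2l.
have := kernel_card Trf_flin ht0; rewrite hFc => e.
apply/eqP; rewrite eqn_leq up /= leqNgt; apply/negP => lt.
have : (#|[set t | Trf t == 0%R]| * #|Fqs| < q ^ 3)%N.
  apply: (leq_ltn_trans (leq_mul kup (leqnn _))).
  by rewrite [X in (_ < X)%N]expnSr ltn_pmul2l // expn_gt0 q0.
by rewrite e ltnn.
Qed.

Lemma count_main L phi : flin L -> flin phi -> L 1 = 0 -> phi 1 = 0 ->
  #|[set t | L t + phi (t * fr t) == 0%R]| != (q ^ 2 - q)%N.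
Proof.
move=> Lf pf L1 p1; have [LD LZ LF] := Lf; have [pD pZ pF] := pf.
have q0 : (0 < q)%N by apply: ltnW.
set Z := [set t | _].
pose hh t := L t + phi (t * fr t).
pose ell t := phi (t + fr t).
have ellf : flin ell.
  split.
  - by move=> x y; rewrite /ell frD -pD; congr phi; ring.
  - move=> l x hl; rewrite /ell frM hl -pZ //; congr phi; ring.
  - by move=> x; rewrite /ell pF.
have hhF t : fr (hh t) = hh t by rewrite /hh frD LF pF.
have L0 s : fr s = s -> L s = 0 by move=> hs; rewrite -[s]mulr1 LZ // L1 mulr0.
have ell1 : ell 1 = 0 by rewrite /ell fr1 pD p1 addr0.
have ell0 s : fr s = s -> ell s = 0.
  by move=> hs; rewrite -[s]mulr1 (proj1 (proj2 (and3_rect (fun a b c => conj a (conj b c)) ellf))) // ell1 mulr0.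
have shift t s : fr s = s -> hh (t + s) = hh t + s * ell t.
  move=> hs; rewrite /hh LD (L0 s hs) addr0.
  have -> : (t + s) * fr (t + s) = t * fr t + (s * (t + fr t) + (s * s) * 1).
    by rewrite frD hs; ring.
  by rewrite !pD (pZ s) // (pZ (s * s)) ?frM ?hs // p1 mulr0 addr0 addrA.
have FqZ : Fqs \subset Z.
  apply/subsetP => s; rewrite !inE => /eqP hs.
  move: (shift 0 s hs); rewrite add0r /hh => ->.
  by rewrite /hh /ell mul0r fr0 add0r (flin0 Lf) (flin0 pf) mulr0 !addr0.
case: (pickP (fun t => ell t != 0)) => [t0 /= ht0|H].
  set K := [set t | ell t == 0%R].
  have cK := kernel_card ellf ht0; rewrite card_Fq hFc -/K in cK.
  have cK2 : #|K| = (q ^ 2)%N.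
    by apply/eqP; rewrite -(eqn_pmul2r q0) cK -expnSr.
  have FqK : Fqs \subset K.
    by apply/subsetP => s; rewrite !inE => /eqP hs; rewrite ell0.
  pose m t := (t - hh t / ell t, hh t / ell t).
  have mi : {in ~: K &, injective m}.
    move=> x y _ _ e; have : (m x).1 + (m x).2 = (m y).1 + (m y).2 by rewrite e.
    by rewrite /= !subrK.
  have ms : m @: (~: K) \subset setX (Z :\: K) Fqs.
    apply/subsetP => y /imsetP [t ht ->]; move: ht; rewrite !inE /= => ht.
    have hc : fr (hh t / ell t) = hh t / ell t.
      by rewrite frM frV hhF (proj2 (proj2 (and3_rect (fun a b c => conj a (conj b c)) ellf))).
    have hc' : fr (- (hh t / ell t)) = - (hh t / ell t) by rewrite frN hc.
    rewrite hc eqxx andbT.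
    have := shift t _ hc'; rewrite /hh => ->.
    rewrite mulNr divfK // subrr eqxx andbT.
    by rewrite flinB // (ell0 _ hc) subr0.
  have le1 : (#|~: K| <= #|Z :\: K| * q)%N.
    by rewrite -(card_in_imset mi) -card_Fq -cardsX; apply: subset_leq_card.
  have cC : #|~: K| = (q ^ 3 - q ^ 2)%N.
    by rewrite cardsCs setCK -cK2 -hFc.
  have le2 : (q ^ 2 - q <= #|Z :\: K|)%N.
    rewrite -(leq_pmul2r q0) mulnBl -expnSr mulnn; by rewrite -cC.
  have le3 : (q <= #|Z :&: K|)%N.
    by rewrite -card_Fq; apply: subset_leq_card; rewrite subsetI FqZ FqK.
  have : (q ^ 2 <= #|Z|)%N.
    rewrite -(cardsID K Z); apply: leq_trans (leq_add le3 le2).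
    by rewrite subnKC // -mulnn leq_pmulr.
  apply: contraL => /eqP ->; rewrite -ltnNge ltn_subrL q0.
  by rewrite expn_gt0 q0.
have ell_0 t : ell t = 0 by have := H t => /= /negbFE /eqP.
have p_0 x : phi x = 0.
  have -> : x = Trf x * 1 - (fr x + fr (fr x)) by rewrite /Trf; ring.
  by rewrite flinB // pZ ?Trf_Fq // p1 mulr0 -/(ell (fr x)) ell_0 subr0.
have eZ : Z = [set t | L t == 0%R].
  by apply/setP => t; rewrite !inE p_0 addr0.
case: (pickP (fun t => L t != 0)) => [t0 /= ht0|H'].
  have cK := kernel_card Lf ht0; rewrite card_Fq hFc -eZ in cK.
  have cK2 : #|Z| = (q ^ 2)%N.
    by apply/eqP; rewrite -(eqn_pmul2r q0) cK -expnSr.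
  rewrite cK2; apply/eqP => e.
  have : (q ^ 2 - q < q ^ 2)%N by rewrite ltn_subrL q0 expn_gt0 q0.
  by rewrite -e ltnn.
have -> : Z = setT.
  by rewrite eZ; apply/setP => t; rewrite !inE; have := H' t => /= /negbFE.
rewrite cardsT hFc; apply/eqP => e.
have : (q ^ 2 - q < q ^ 3)%N.
  apply: (leq_ltn_trans (leq_subr _ _)); by rewrite ltn_exp2l.
by rewrite e ltnn.
Qed.

Lemma frfrE x : x ^+ (q ^ 2) = fr (fr x). Proof. by rewrite frfr. Qed.

Lemma U1vecE (a b c d : F) : U1vec q a b c d =
  \row_(i < 8) nth 0 [:: a; fr (fr b); fr b; c; b; fr c; fr (fr c); d] i.
Proof. by rewrite /U1vec !frfrE. Qed.

Lemma U1vecD (a b c d a' b' c' d' : F) :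
  U1vec q a b c d + U1vec q a' b' c' d' = U1vec q (a + a') (b + b') (c + c') (d + d').
Proof.
rewrite !U1vecE; apply/rowP => i; rewrite !mxE.
by case: i => [[|[|[|[|[|[|[|[|i]]]]]]]] hi] //=; rewrite ?frD ?addr0.
Qed.

Lemma U1vecZ (l a b c d : F) : fr l = l ->
  l *: U1vec q a b c d = U1vec q (l * a) (l * b) (l * c) (l * d).
Proof.
move=> hl; rewrite !U1vecE; apply/rowP => i; rewrite !mxE.
by case: i => [[|[|[|[|[|[|[|[|i]]]]]]]] hi] //=; rewrite ?frM ?hl ?mulr0.
Qed.

Variable f : 'rV[F]_8 -> F.
Hypothesis hH : hyperplane_functional q f.

Definition g (a b c d : F) := f (U1vec q a b c d).

Lemma inU1_U (a b c d : F) : fr a = a -> fr d = d -> inU1 q (U1vec q a b c d).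
Proof. by move=> ha hd; exists a, b, c, d; split => //; apply/eqP. Qed.

Lemma gD a b c d a' b' c' d' : fr a = a -> fr d = d -> fr a' = a' -> fr d' = d' ->
  g a b c d + g a' b' c' d' = g (a + a') (b + b') (c + c') (d + d').
Proof.
case: hH => hD _ _ _ ha hd ha' hd'.
by rewrite /g -U1vecD hD //; apply: inU1_U.
Qed.

Lemma gZ l a b c d : fr l = l -> fr a = a -> fr d = d ->
  g (l * a) (l * b) (l * c) (l * d) = l * g a b c d.
Proof.
case: hH => _ hZ _ _ hl ha hd.
by rewrite /g -U1vecZ // hZ //; [apply/eqP | apply: inU1_U].
Qed.

Lemma gF a b c d : fr a = a -> fr d = d -> fr (g a b c d) = g a b c d.
Proof. case: hH => _ _ hF _ ha hd; apply/eqP; exact: (hF _ (inU1_U b c ha hd)). Qed.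

Definition Ta (y : F) := y * fr y * fr (fr y).
Definition Tb (y0 y1 : F) := fr (fr y0) * fr y0 * y1.
Definition Tc (y0 y1 : F) := y0 * fr (fr y1) * fr y1.
Definition G y0 y1 := g (Ta y0) (Tb y0 y1) (Tc y0 y1) (Ta y1).

Lemma Ta_Fq y : fr (Ta y) = Ta y. Proof. by rewrite /Ta !frM fr3; ring. Qed.

Definition lin (P Q R x : F) := x * P + fr x * Q + fr (fr x) * R.
Definition Lf a1 P Q R P' Q' R' d1 x :=
  g (Trf (x * a1)) (lin P Q R x) (lin P' Q' R' x) (Trf (x * d1)).

Lemma Lf_flin a1 P Q R P' Q' R' d1 : flin (Lf a1 P Q R P' Q' R' d1).
Proof.
have [TD TZ TF] := Trf_flin.
split.
- move=> x y; rewrite /Lf gD ?TF //; congr g.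
  + by rewrite -TD mulrDl.
  + by rewrite /lin !frD; ring.
  + by rewrite /lin !frD; ring.
  + by rewrite -TD mulrDl.
- move=> l x hl; rewrite /Lf -gZ ?TF //; congr g.
  + by rewrite -TZ // mulrA.
  + by rewrite /lin !frM !hl; ring.
  + by rewrite /lin !frM !hl; ring.
  + by rewrite -TZ // mulrA.
- by move=> x; rewrite /Lf gF ?TF.
Qed.

Definition LW y0 y1 z0 z1 :=
  Lf (z0 * fr y0 * fr (fr y0))
     (fr (fr y0) * fr y0 * z1) (fr (fr y0) * fr z0 * y1) (fr (fr z0) * fr y0 * y1)
     (z0 * fr (fr y1) * fr y1) (y0 * fr (fr y1) * fr z1) (y0 * fr (fr z1) * fr y1)
     (z1 * fr y1 * fr (fr y1)).
Definition LV y0 y1 z0 z1 :=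
  Lf (z0 * fr z0 * fr (fr y0))
     (fr (fr y0) * fr z0 * z1) (fr (fr z0) * fr z0 * y1) (fr (fr z0) * fr y0 * z1)
     (z0 * fr (fr y1) * fr z1) (y0 * fr (fr z1) * fr z1) (z0 * fr (fr z1) * fr y1)
     (z1 * fr z1 * fr (fr y1)).

Lemma frDE a b : fr a = a -> fr b = b -> fr (a + b) = a + b.
Proof. by move=> ha hb; rewrite frD ha hb. Qed.
Lemma frME a b : fr a = a -> fr b = b -> fr (a * b) = a * b.
Proof. by move=> ha hb; rewrite frM ha hb. Qed.
Ltac fqt := first [ exact: Trf_Fq | exact: Ta_Fq | apply: frDE; fqt | apply: frME; fqt ].

Lemma G_expand y0 y1 z0 z1 t :
  G (y0 + t * z0) (y1 + t * z1) =
  G y0 y1 + LW y0 y1 z0 z1 t + LV y0 y1 z0 z1 (t * fr t) + Ta t * G z0 z1.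
Proof.
have [_ _ TF] := Trf_flin.
rewrite /G /LW /LV /Lf -gZ; try fqt.
rewrite !gD; try fqt.
congr g; rewrite /Trf /lin /Ta /Tb /Tc !(frD, frM, fr3); try ring.



Qed.

Lemma G_scale l y0 y1 : G (l * y0) (l * y1) = Ta l * G y0 y1.
Proof.
rewrite /G -gZ ?Ta_Fq //; congr g; rewrite /Ta /Tb /Tc !frM; ring.
Qed.

Lemma fr_eq0 x : (fr x == 0) = (x == 0).
Proof. by rewrite /fr expf_eq0; case: q q1. Qed.

Lemma Ta_eq0 x : (Ta x == 0) = (x == 0).
Proof. by rewrite /Ta !mulf_eq0 !fr_eq0 !orbb. Qed.

Lemma theta_Some t : f (theta q (Some t)) = G 1 t.
Proof.
rewrite /theta /G /g; congr (f (U1vec _ _ _ _ _)); rewrite /Ta /Tb /Tc ?fr1 ?mulr1 ?mul1r //.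
  by rewrite exprD frfrE.
by rewrite !exprD expr1 frfrE; rewrite /fr; ring.
Qed.

Lemma theta_None : f (theta q None) = G 0 1.
Proof.
rewrite /theta /G /g; congr (f (U1vec _ _ _ _ _)); rewrite /Ta /Tb /Tc ?fr1 ?fr0 ?mulr0 ?mul0r ?mulr1 //.
Qed.

Lemma theta_dehom (v : 'rV[F]_2) : v != 0 ->
  (f (theta q (dehom v)) == 0) = (G (v 0 0) (v 0 1) == 0).
Proof.
move=> v0; rewrite /dehom; case: ifP => [h0|/negbFE/eqP h0].
  rewrite theta_Some.
  have -> : G (v 0 0) (v 0 1) = G (v 0 0 * 1) (v 0 0 * (v 0 1 / v 0 0)).
    by rewrite mulr1 mulrC divfK.
  by rewrite G_scale mulf_eq0 Ta_eq0 (negbTE h0).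
have h1 : v 0 1 != 0.
  apply: contra v0 => /eqP h1; apply/eqP/rowP => i; rewrite mxE.
  by case: i => [[|[|i]] hi] //=; [rewrite -h0 | rewrite -h1]; congr (v _ _); apply: val_inj.
rewrite theta_None h0.
have -> : G 0 (v 0 1) = G (v 0 1 * 0) (v 0 1 * 1) by rewrite mulr0 mulr1.
by rewrite G_scale mulf_eq0 Ta_eq0 (negbTE h1).
Qed.

Lemma homM (x : option F) (M : 'M[F]_2) j :
  (hom x *m M) 0 j = if x is Some t then M 0 j + t * M 1 j else M 1 j.
Proof.
case: x => [t|]; rewrite mxE !big_ord_recr big_ord0 /= !mxE /= add0r.
  by rewrite mul1r; congr (M _ _ + t * M _ _); apply: val_inj.
by rewrite mul0r add0r mul1r; congr (M _ _); apply: val_inj.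
Qed.

Lemma hom_neq0 (x : option F) : hom x != 0.
Proof.
apply/negP => /eqP /rowP h; case: x h => [t|] h.
  by have := h 0; rewrite !mxE /= => /eqP; rewrite oner_eq0.
by have := h 1; rewrite !mxE /= => /eqP; rewrite oner_eq0.
Qed.

Lemma homM_neq0 (x : option F) (M : 'M[F]_2) : M \in unitmx -> hom x *m M != 0.
Proof.
move=> uM; apply: contra (hom_neq0 x) => /eqP h.
by rewrite -(mulmxK uM (hom x)) h mul0mx.
Qed.

Lemma dehom_hom (x : option F) : dehom (hom x) = x.
Proof.
by rewrite /dehom; case: x => [t|]; rewrite !mxE /= ?oner_eq0 ?eqxx //= divr1.
Qed.

Lemma dehom_scale (c : F) (w : 'rV[F]_2) : c != 0 -> dehom (c *: w) = dehom w.
Proof.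
move=> c0; rewrite /dehom !mxE mulf_eq0 (negbTE c0) /=.
by case: ifP => // _; congr Some; rewrite invfM mulrACA mulfV // mul1r.
Qed.

Lemma hom_dehom (v : 'rV[F]_2) : v != 0 -> exists2 c, c != 0 & hom (dehom v) = c *: v.
Proof.
move=> v0; rewrite /dehom; case: ifP => [h0|/negbFE/eqP h0].
  exists (v 0 0)^-1; first by rewrite invr_eq0.
  apply/rowP => i; rewrite !mxE; case: i => [[|[|i]] hi] //=.
    by rewrite (_ : Ordinal hi = 0) ?mulVf //; apply: val_inj.
  by rewrite mulrC (_ : Ordinal hi = 1) //; apply: val_inj.
have h1 : v 0 1 != 0.
  apply: contra v0 => /eqP h1; apply/eqP/rowP => i; rewrite mxE.
  by case: i => [[|[|i]] hi] //=; [rewrite -h0 | rewrite -h1]; congr (v _ _); apply: val_inj.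
exists (v 0 1)^-1; first by rewrite invr_eq0.
apply/rowP => i; rewrite !mxE; case: i => [[|[|i]] hi] //=.
  by rewrite (_ : Ordinal hi = 0) ?h0 ?mulr0 //; apply: val_inj.
by rewrite (_ : Ordinal hi = 1) ?mulVf //; apply: val_inj.
Qed.

Lemma pgl_actK (M : 'M[F]_2) : M \in unitmx -> cancel (pgl_act M) (pgl_act (invmx M)).
Proof.
move=> uM x; rewrite /pgl_act.
have [c c0 ->] := hom_dehom (homM_neq0 x uM).
by rewrite -scalemxAl mulmxK // dehom_scale // dehom_hom.
Qed.

Lemma roots_small (cs : seq F) : has (fun c => c != 0) cs ->
  (#|[set s : F | (\sum_(i < size cs) cs`_i * s ^+ i == 0)%R]| < size cs)%N.
Proof.
move=> /hasP [c cin c0].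
pose p : {poly F} := \poly_(i < size cs) cs`_i.
have p0 : p != 0.
  apply/eqP => /(congr1 (fun r : {poly F} => r`_(index c cs))).
  rewrite coef_poly index_mem cin nth_index // coef0 => /eqP; by rewrite (negbTE c0).
apply: (leq_trans _ (size_poly _ _)); rewrite -/p.
apply: leq_ltn_trans (card_roots p0); apply: subset_leq_card; apply/subsetP => s.
by rewrite !inE /root horner_poly.
Qed.

Lemma main_sec (M : 'M[F]_2) : M \in unitmx ->
  #|meetO1 q f| = (q ^ 2 - q + 1)%N ->
  (#|subline q M :&: meetO1 q f| <= 3)%N.
Proof.
move=> uM hmeet.
set y0 := M 0 0; set y1 := M 0 1; set z0 := M 1 0; set z1 := M 1 1.
pose Gh (x : option F) := G ((hom x *m M) 0 0) ((hom x *m M) 0 1).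
have memA x : (pgl_act M x \in meetO1 q f) = (Gh x == 0).
  by rewrite /meetO1 inE /pgl_act theta_dehom // homM_neq0.
pose LW1 := LW y0 y1 z0 z1; pose LV1 := LV y0 y1 z0 z1.
have LWf : flin LW1 by apply: Lf_flin.
have LVf : flin LV1 by apply: Lf_flin.
set c0 := G y0 y1; set c3 := G z0 z1.
pose c1 := LW1 1; pose c2 := LV1 1.
have GhS t : Gh (Some t) = c0 + LW1 t + LV1 (t * fr t) + Ta t * c3.
  by rewrite /Gh !homM -G_expand.
have GhN : Gh None = c3 by rewrite /Gh !homM.
have GhFq s : fr s = s ->
    Gh (Some s) = \sum_(i < 4) [:: c0; c1; c2; c3]`_i * s ^+ i.
  move=> hs; rewrite GhS !big_ord_recr big_ord0 /= add0r.
  have [_ WZ _] := LWf; have [_ VZ _] := LVf.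
  rewrite -[s in LW1 s]mulr1 WZ // hs -[s * s]mulr1 VZ ?frM ?hs //.
  by rewrite /Ta !hs /c1 /c2; rewrite expr0 expr1 !exprS expr0; ring.
rewrite leqNgt; apply/negP => big.
set X := [set x in PG1q F q | Gh x == 0].
have bigX : (3 < #|X|)%N.
  apply: leq_trans big _; apply: leq_trans (leq_imset_card (pgl_act M) X).
  apply: subset_leq_card; apply/subsetP => y; rewrite inE /subline.
  move=> /andP [/imsetP [x hx ->]]; rewrite memA => hG.
  by apply/imsetP; exists x => //; rewrite inE hx hG.
have XS x : x \in X -> (if x is Some s then fr s = s else true) /\ Gh x == 0.
  by rewrite !inE => /andP [hx ->]; split => //; case: x hx => // s /eqP.
have allc : [&& c0 == 0, c1 == 0, c2 == 0 & c3 == 0].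
  apply: contraLR isT => hc; exfalso; move: bigX; apply/negP; rewrite -leqNgt.
  have [c30|c3n] := eqVneq c3 0.
    have hs : has (fun c => c != 0) [:: c0; c1; c2].
      by move: hc; rewrite c30 eqxx andbT /= !negb_and orbF.
    pose R := [set s : F | (\sum_(i < size [:: c0; c1; c2]) [:: c0; c1; c2]`_i * s ^+ i == 0)].
    have sub : X \subset None |: (Some @: R).
      apply/subsetP => x /XS; case: x => [s|] [hs' hG]; rewrite !inE //.
      rewrite mem_imset; last by move=> ? ? [].
      by rewrite inE; move: hG; rewrite GhFq // !big_ord_recr !big_ord0 /= c30 mul0r addr0.
    apply: leq_trans (subset_leq_card sub) _.
    rewrite cardsU1; apply: leq_trans (leq_add (leq_b1 _) (leq_imset_card _ _)) _.
    by have := roots_small hs.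
  have hs : has (fun c => c != 0) [:: c0; c1; c2; c3] by rewrite /= c3n !orbT.
  pose R := [set s : F | (\sum_(i < size [:: c0; c1; c2; c3]) [:: c0; c1; c2; c3]`_i * s ^+ i == 0)].
  have sub : X \subset Some @: R.
    apply/subsetP => x /XS; case: x => [s|] [hs' hG].
      by rewrite mem_imset; [rewrite inE -GhFq | move=> ? ? []].
    by move: hG; rewrite GhN (negbTE c3n).
  apply: leq_trans (subset_leq_card sub) _.
  apply: leq_trans (leq_imset_card _ _) _.
  by have := roots_small hs.
move: allc => /and4P [/eqP e0 /eqP e1 /eqP e2 /eqP e3].
set Z := [set t | LW1 t + LV1 (t * fr t) == 0%R].
have cnt : #|meetO1 q f| = (1 + #|Z|)%N.
  rewrite -(card_preimset _ (can_inj (pgl_actK uM))).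
  have -> : pgl_act M @^-1: meetO1 q f = None |: (Some @: Z).
    apply/setP => x; rewrite inE memA !inE; case: x => [t|] /=.
      by rewrite mem_imset; [rewrite inE GhS e0 e3 mulr0 addr0 add0r | move=> ? ? []].
    by rewrite GhN e3 eqxx.
  rewrite cardsU1 card_imset; last by move=> ? ? [].
  suff -> : None \notin Some @: Z by []. by apply/imsetP => -[].
have cZ : #|Z| = (q ^ 2 - q)%N.
  by move: hmeet; rewrite cnt addnC => /addIn.
by move: (count_main LWf LVf e1 e2); rewrite -/Z cZ eqxx.
Qed.
End Frob.

Unset Implicit Arguments.
Theorem mainTheorem7 (F : finFieldType) (q : nat)
  (hq_pp : exists p k : nat, [/\ prime p, (0 < k)%N & q = (p ^ k)%N])
  (hF : #|F| = (q ^ 3)%N) (hq4 : (4 <= q)%N)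
  (f : 'rV[F]_8 -> F) (hH : hyperplane_functional q f)
  (hmeet : #|meetO1 q f| = (q ^ 2 - q + 1)%N) :
  forall M : 'M[F]_2, M \in unitmx ->
    (#|subline q M :&: meetO1 q f| <= 3)%N.
Proof.
move=> M uM.
have [p [k [pp k0 qE]]] := hq_pp.
have chp : p \in [pchar F].
  apply: (@card_finPcharP _ p (k * 3)) => //; by rewrite hF qE expnM.
have frD : forall x y : F, (x + y) ^+ q = x ^+ q + y ^+ q.
  move=> x y; apply: exprDn_pchar; rewrite qE pnatX (pnatE _ pp) chp //.
have fr3 : forall x : F, x ^+ (q ^ 3) = x by move=> x; rewrite -hF expf_card.
have q1 : (1 < q)%N by apply: leq_trans hq4.
exact: (main_sec frD fr3 q1 hF hH uM hmeet).
Qed.
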